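(* If $G\in\mathbb{G}_\pi$ and $S\in st(G)$, then $\mathcal{R}_S(G)\in\mathbb{G}_\pi$. In particular, no loop of $G$ and no loop of any reduction of $G$ can have weight $\lambda$.
   Context: Let $\mathbb{W}$ be the field of rational functions $p(\lambda)/q(\lambda)$ in a complex variable $\lambda$ with $p,q\in\mathbb{C}[\lambda]$, $q\neq 0$. For $w=p/q\in\mathbb{W}$ let $\pi(w)=\deg p-\deg q$ (the zero function is regarded as satisfying $\pi\le 0$). A graph $G=(V,E,\omega)$ is a finite directed graph with vertex set $V=\{v_1,\dots,v_n\}$, edge set $E$ (loops allowed, at most one edge $e_{ij}$ from $v_i$ to $v_j$) and weights $\omega:E\to\mathbb{W}\setminus\{0\}$, with $\omega(e_{ij})=0$ if there is no such edge; $M(G)_{ij}=\omega(e_{ij})$. $\mathbb{G}_\pi$ is the set of graphs $G$ with $\pi(M(G)_{ij})\le 0$ for every entry. $\bar S=V\setminus S$; $\ell(G)$ is $G$ with loops removed; $G|_U$ is the induced subgraph. A path is a sequence of distinct vertices $u_1,\dots,u_m$ ($m\ge2$) with edges $u_k\to u_{k+1}$; a cycle is such a sequence with $u_1=u_m$ and $u_1,\dots,u_{m-1}$ distinct; $u_2,\dots,u_{m-1}$ are interior vertices. A nonempty $S\subseteq V$ is a structural set ($S\in st(G)$) if $\ell(G)|_{\bar S}$ has no cycles and $\omega(e_{ii})\neq\lambda$ for all $v_i\in\bar S$. For $v_i,v_j\in S$, $\mathcal{B}_{ij}(G;S)$ is the set of paths or cycles from $v_i$ to $v_j$ with no interior vertex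 in $S$; for $\beta=u_1,\dots,u_m$, $\mathcal{P}_\omega(\beta)=\omega(u_1u_2)\prod_{k=2}^{m-1}\frac{\omega(u_ku_{k+1})}{\lambda-\omega(u_ku_k)}$. The reduction $\mathcal{R}_S(G)$ has vertex set $S$, an edge $v_i\to v_j$ iff $\mathcal{B}_{ij}(G;S)\ne\emptyset$, with weight $\sum_{\beta\in\mathcal{B}_{ij}(G;S)}\mathcal{P}_\omega(\beta)$. A reduction of $G$ means a graph obtained from $G$ by a finite sequence of such reductions (each over a structural set of the current graph). *)

(* Defs.v *)
From HB Require Import structures.
From mathcomp Require Import all_boot all_order all_algebra.
From mathcomp Require Import reals complex.
Set Implicit Arguments. Unset Strict Implicit. Unset Printing Implicit Defensive.
Import Order.TTheory GRing.Theory Num.Theory.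
Local Open Scope ring_scope.

Definition Cplx (R : realType) : fieldType := R[i].

Definition W (R : realType) : fieldType := {fraction {poly Cplx R}}.

Definition tof (R : realType) (p : {poly Cplx R}) : W R := @FracField.tofrac _ p.

Definition lam (R : realType) : W R := tof 'X.

(* pi(w) <= 0 : w = p/q with q <> 0 and deg p <= deg q (deg p - deg q does not
   depend on the representation; the zero function satisfies it). *)
Definition pi_le0 (R : realType) (w : W R) : Prop :=
  exists p q : {poly Cplx R}, q != 0 /\ w = tof p / tof q /\ (size p <= size q)%N.

(* A graph on vertices 'I_n is given by its weight matrix M(G):
   M i j = weight of edge v_i -> v_j, or 0 if there is no such edge. *)
Definition edge (R : realType) (n : nat) (M : 'M[W R]_n) : rel 'I_n :=
  fun a b => M a b != 0.

Definition in_Gpi (R : realType) (n : nat) (M : 'M[W R]_n) : Prop :=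
  forall i j, pi_le0 (M i j).

Definition structural (R : realType) (n : nat) (M : 'M[W R]_n) (S : {set 'I_n}) : Prop :=
  [/\ S != set0,
      (* ell(G)|_{S-bar} has no cycles (cycles of ell(G) have >= 2 distinct vertices) *)
      (forall s : seq 'I_n, (2 <= size s)%N -> uniq s -> all (fun v => v \in ~: S) s ->
          ~~ cycle (edge M) s)
    & (forall i, i \in ~: S -> M i i != lam R)].

(* P_omega of the path/cycle i, s_1, ..., s_k, j (s = interior vertices) *)
Fixpoint pathw (R : realType) (n : nat) (M : 'M[W R]_n) (i : 'I_n) (s : seq 'I_n) (j : 'I_n) : W R :=
  match s with
  | [::] => M i j
  | x :: s' => M i x * (pathw M x s' j / (lam R - M x x))
  end.

(* The interior-vertex list t describes an element of B_ij(G;S) *)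
Definition in_B (R : realType) (n : nat) (M : 'M[W R]_n) (S : {set 'I_n})
    (i : 'I_n) (s : seq 'I_n) (j : 'I_n) : bool :=
  [&& uniq s, all (fun v => v \in ~: S) s & path (edge M) i (rcons s j)].

(* weight of v_i -> v_j in R_S(G) : sum over B_ij(G;S) (interior lists of
   distinct vertices have length at most n) *)
Definition redw (R : realType) (n : nat) (M : 'M[W R]_n) (S : {set 'I_n}) (i j : 'I_n) : W R :=
  \sum_(k < n.+1) \sum_(t : k.-tuple 'I_n | in_B M S i t j) pathw M i t j.

Definition reduce (R : realType) (n : nat) (M : 'M[W R]_n) (S : {set 'I_n}) : 'M[W R]_#|S| :=
  \matrix_(a, b) redw M S (enum_val a) (enum_val b).

Inductive is_reduction (R : realType) (n : nat) (M : 'M[W R]_n) : forall m, 'M[W R]_m -> Prop :=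
  | red_one (S : {set 'I_n}) : structural M S -> is_reduction M (reduce M S)
  | red_step m (M' : 'M[W R]_m) (S : {set 'I_m}) :
      is_reduction M M' -> structural M' S -> is_reduction M (reduce M' S).

(* Main.v *)
Require Import Defs.
From HB Require Import structures.
From mathcomp Require Import all_boot all_order all_algebra.
From mathcomp Require Import reals complex.
Import Order.TTheory GRing.Theory Num.Theory.
Local Open Scope ring_scope.

Section P.
Variable R : realType.
Local Notation P := {poly Cplx R}.

Lemma tofM (p q : P) : tof (p * q) = tof p * tof q.
Proof. exact: tofracM. Qed.
Lemma tofB (p q : P) : tof (p - q) = tof p - tof q.
Proof. exact: tofracB. Qed.
Lemma tofD (p q : P) : tof (p + q) = tof p + tof q.
Proof. exact: tofracD. Qed.
Lemma tof_eq0 (p : P) : (tof p == 0) = (p == 0).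
Proof. exact: tofrac_eq0. Qed.
Lemma tof_eq (p q : P) : (tof p == tof q) = (p == q).
Proof. exact: tofrac_eq. Qed.
Lemma tof0 : tof (0 : P) = 0. Proof. exact: tofrac0. Qed.
Lemma tof1 : tof (1 : P) = 1. Proof. exact: tofrac1. Qed.

Lemma leq_pred2 m n : (m <= n)%N -> (m.-1 <= n.-1)%N.
Proof. by case: m n => [|m] [|n]. Qed.

Lemma pi0 : pi_le0 (0 : W R).
Proof. exists 0, 1; rewrite oner_neq0 tof0 mul0r size_poly0; done. Qed.

Lemma piD (a b : W R) : pi_le0 a -> pi_le0 b -> pi_le0 (a + b).
Proof.
move=> [p1 [q1 [q1n [-> s1]]]] [p2 [q2 [q2n [-> s2]]]].
exists (p1 * q2 + p2 * q1), (q1 * q2); split; first by rewrite mulf_neq0.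
split.
  have h1 : tof q1 != 0 by rewrite tof_eq0.
  have h2 : tof q2 != 0 by rewrite tof_eq0.
  by rewrite addf_div // tofD !tofM.
apply: (leq_trans (size_polyD _ _)); rewrite geq_max (size_mul q1n q2n).
apply/andP; split; apply: (leq_trans (size_mul_leq _ _)).
  by apply: leq_pred2; rewrite leq_add2r.
by rewrite addnC; apply: leq_pred2; rewrite leq_add2l.
Qed.

Lemma piM (a b : W R) : pi_le0 a -> pi_le0 b -> pi_le0 (a * b).
Proof.
move=> [p1 [q1 [q1n [-> s1]]]] [p2 [q2 [q2n [-> s2]]]].
exists (p1 * p2), (q1 * q2); split; first by rewrite mulf_neq0.
split.
  by rewrite mulf_div !tofM.
rewrite (size_mul q1n q2n); apply: (leq_trans (size_mul_leq _ _)).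
by apply: leq_pred2; apply: leq_add.
Qed.

Lemma piV (a : W R) : pi_le0 a -> pi_le0 ((lam R - a)^-1).
Proof.
move=> [p [q [qn [-> s]]]].
have sz : size ('X * q - p) = (size q).+1.
  rewrite size_addl; first by rewrite mulrC (size_mulX qn).
  by rewrite size_opp mulrC (size_mulX qn) ltnS.
have nz : 'X * q - p != 0 by rewrite -size_poly_eq0 sz.
exists q, ('X * q - p); split => //; split; last by rewrite sz.
have h1 : tof q != 0 by rewrite tof_eq0.
by rewrite /lam -[tof 'X](mulfK h1) -mulrBl invf_div tofB tofM.
Qed.

Lemma not_lam (a : W R) : pi_le0 a -> a != lam R.
Proof.
move=> [p [q [qn [-> s]]]]; apply/negP => /eqP e.
have h1 : tof q != 0 by rewrite tof_eq0.
have : tof p = tof ('X * q).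
  have : tof p = lam R * tof q by rewrite -e mulfVK.
  by rewrite /lam -tofM.
move/eqP; rewrite tof_eq => /eqP ep.
by move: s; rewrite ep mulrC (size_mulX qn) // ltnn.
Qed.

Lemma pi_pathw n (M : 'M[W R]_n) : in_Gpi M -> forall s i j, pi_le0 (pathw M i s j).
Proof.
move=> HM; elim=> [|x s IH] i j /=; first exact: HM.
apply: piM; first exact: HM.
apply: piM; first exact: IH.
exact: piV.
Qed.

Lemma pi_reduce n (M : 'M[W R]_n) S : in_Gpi M -> in_Gpi (reduce M S).
Proof.
move=> HM i j; rewrite /reduce mxE /redw.
apply: big_ind; [exact: pi0 | exact: piD | move=> k _].
apply: big_ind; [exact: pi0 | exact: piD | move=> t _].
exact: pi_pathw.
Qed.
End P.

Theorem lemma1 (R : realType) (n : nat) (M : 'M[W R]_n) :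
  in_Gpi M ->
  (forall S : {set 'I_n}, structural M S -> in_Gpi (reduce M S)) /\
  (forall i, M i i != lam R) /\
  (forall m (M' : 'M[W R]_m), is_reduction M M' -> forall i, M' i i != lam R).
Proof.
move=> HM; split; first by move=> S _; exact: pi_reduce.
split; first by move=> i; apply: not_lam.
move=> m M' H.
have : in_Gpi M'.
  elim: H => [S _ | m0 M0 S _ IH _]; exact: pi_reduce.
by move=> HM' i; apply: not_lam.
Qed.
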